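(* Assume (A) and $c_1<c_1^F$. Let $t^*>t_0$ be a minimizer of $t\mapsto\sup_{s\in(0,t)}\Upsilon(s,t)$ over $t>t_0$, and let $s^*\in(0,t^* )$ be a maximizer of $s\mapsto\Upsilon(s,t^* )$ over $(0,t^* )$. Then $k(s^*,t^* )\ge c_1s^*$.
   Context: $v:[0,\infty)\to[0,\infty)$ is continuous, $v(0)=0$, $\lim_{t\to\infty}v(t)/t^\alpha=0$ for some $\alpha<2$, and is the variance function of a centered Gaussian process $A$ on $\mathbb R$ with stationary increments and $A(0)=0$; $\Gamma(s,t):=\tfrac12(v(|s|)+v(|t|)-v(|t-s|))$. Fix $b>0$, $c_1>c_2>0$, $t_0:=b/(c_1-c_2)$. For $0<s<t$, $\Sigma(s,t):=\begin{pmatrix}v(t)&\Gamma(s,t)\\ \Gamma(s,t)&v(s)\end{pmatrix}$ (assumed nonsingular), $\Lambda_{s,t}(y,z):=\frac12(y,z)\Sigma(t-s,t)^{-1}(y,z)^\top$, $k(s,t):=\frac{\Gamma(s,t)}{v(t)}(b+c_2t)$, $\Upsilon(s,t):=\Lambda_{s,t}(b+c_2t,b+c_2t-c_1s)$ if $k(s,t)>c_1s$, else $(b+c_2t)^2/(2v(t))$. $L_c(t):=(b+ct)^2/(2v(t))$; $t^F_{c_2}$ a minimizer of $L_{c_2}$ on $(0,\infty)$; $c_1^F:=\sup_{s\in(0,t^F_{c_2})}k(s,t^F_{c_2})/s$. Assumption (A): $\sqrt v\in C^2([0,\infty))$, strictly increasing and strictly concave. *)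

(* Defs.v *)
From Stdlib Require Import Reals Lra.
From Coquelicot Require Import Coquelicot.
Open Scope R_scope.

Definition Gam (v : R -> R) (s t : R) : R :=
  (v (Rabs s) + v (Rabs t) - v (Rabs (t - s))) / 2.

(* Sigma(s,t) = [[v t, Gam s t],[Gam s t, v s]]; its determinant *)
Definition detSigma (v : R -> R) (s t : R) : R :=
  v t * v s - Gam v s t * Gam v s t.

(* Lambda_{s,t}(y,z) = 1/2 (y,z) Sigma(t-s,t)^{-1} (y,z)^T, with the
   explicit inverse of the symmetric 2x2 matrix [[A,B],[B,C]]:
   1/(AC-B^2) [[C,-B],[-B,A]]. *)
Definition Lambda (v : R -> R) (s t y z : R) : R :=
  let A := v t in
  let B := Gam v (t - s) t in
  let C := v (t - s) in
  (1/2) * ((C * y * y - 2 * B * y * z + A * z * z) / (A * C - B * B)).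

Definition kfun (v : R -> R) (b c2 s t : R) : R :=
  Gam v s t / v t * (b + c2 * t).

Definition Upsilon (v : R -> R) (b c1 c2 s t : R) : R :=
  if Rlt_dec (c1 * s) (kfun v b c2 s t)
  then Lambda v s t (b + c2 * t) (b + c2 * t - c1 * s)
  else (b + c2 * t) ^ 2 / (2 * v t).

Definition Lc (v : R -> R) (b c t : R) : R := (b + c * t) ^ 2 / (2 * v t).

Definition supUpsilon (v : R -> R) (b c1 c2 t : R) : Rbar :=
  Lub_Rbar (fun x => exists s, 0 < s < t /\ x = Upsilon v b c1 c2 s t).

Definition c1F (v : R -> R) (b c2 tF : R) : Rbar :=
  Lub_Rbar (fun x => exists s, 0 < s < tF /\ x = kfun v b c2 s tF / s).

Definition psd_kernel (v : R -> R) : Prop :=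
  forall (n : nat) (t a : nat -> R),
    0 <= sum_f_R0 (fun i => sum_f_R0 (fun j => a i * a j * Gam v (t i) (t j)) n) n.

(* Assumption (A): sqrt v in C^2([0,oo)) (= restriction of a C^2 function
   on R), strictly increasing and strictly concave on [0,oo). *)
Definition assumptionA (v : R -> R) : Prop :=
  (exists g : R -> R,
     (forall t, 0 <= t -> g t = sqrt (v t)) /\
     (forall x, ex_derive g x) /\
     (forall x, ex_derive (Derive g) x) /\
     (forall x, continuous (Derive (Derive g)) x)) /\
  (forall x y, 0 <= x -> x < y -> sqrt (v x) < sqrt (v y)) /\
  (forall x y l, 0 <= x -> 0 <= y -> x <> y -> 0 < l < 1 ->
     l * sqrt (v x) + (1 - l) * sqrt (v y) < sqrt (v (l * x + (1 - l) * y))).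

(* Main.v *)
Require Import Defs.
From Stdlib Require Import Reals Lra.
From Coquelicot Require Import Coquelicot.
Open Scope R_scope.

Lemma prod_lip (x x' u u' : R) :
  Rabs (x * u - x' * u') <= Rabs (x - x') * Rabs u + Rabs x' * Rabs (u - u').
Proof.
  replace (x * u - x' * u') with ((x - x') * u + x' * (u - u')) by ring.
  eapply Rle_trans. apply Rabs_triang. rewrite !Rabs_mult. lra.
Qed.

Lemma inv_lip (p p' m : R) : 0 < m -> m <= p -> m <= p' ->
  Rabs (/ p - / p') <= Rabs (p - p') / (m * m).
Proof.
  intros hm hp hp'.
  replace (/ p - / p') with ((p' - p) / (p * p')) by (field; lra).
  unfold Rdiv. rewrite Rabs_mult, Rabs_minus_sym.
  apply Rmult_le_compat_l. apply Rabs_pos.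
  rewrite Rabs_inv, Rabs_pos_eq by nra.
  apply Rinv_le_contravar. nra. apply Rmult_le_compat; lra.
Qed.

Lemma sq_quot (a a' p p' m A B C : R) : 0 < m -> m <= p -> m <= p' ->
  Rabs (a - a') <= A -> Rabs a <= B -> Rabs a' <= B -> Rabs (p - p') <= C ->
  a ^ 2 / p - a' ^ 2 / p' <= A * (2 * B) / m + B * B * C / (m * m).
Proof.
  intros hm hp hp' hA hB hB' hC.
  replace (a ^ 2 / p - a' ^ 2 / p') with ((a - a') * (a + a') * / p + (a' * a') * (/ p - / p'))
    by (field; lra).
  assert (h1 : (a - a') * (a + a') * / p <= A * (2 * B) / m).
  { eapply Rle_trans. apply Rle_abs. rewrite !Rabs_mult.
    rewrite Rabs_inv, (Rabs_pos_eq p) by lra.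
    assert (Rabs (a + a') <= 2 * B) by (eapply Rle_trans; [apply Rabs_triang|lra]).
    assert (/ p <= / m) by (apply Rinv_le_contravar; lra).
    assert (0 < / p) by (apply Rinv_0_lt_compat; lra).
    assert (Rabs (a - a') * Rabs (a + a') <= A * (2 * B))
      by (apply Rmult_le_compat; auto; apply Rabs_pos).
    unfold Rdiv. apply Rmult_le_compat; auto.
    apply Rmult_le_pos; apply Rabs_pos. lra. }
  assert (h2 : a' * a' * (/ p - / p') <= B * B * C / (m * m)).
  { eapply Rle_trans. apply Rle_abs. rewrite !Rabs_mult.
    pose proof (inv_lip p p' m hm hp hp').
    assert (Rabs (p - p') / (m * m) <= C / (m * m))
      by (unfold Rdiv; apply Rmult_le_compat_r; [left; apply Rinv_0_lt_compat; nra| auto]).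
    assert (Rabs a' * Rabs a' <= B * B) by (apply Rmult_le_compat; auto; apply Rabs_pos).
    replace (B * B * C / (m * m)) with ((B * B) * (C / (m * m))) by (field; lra).
    apply Rmult_le_compat; auto. apply Rmult_le_pos; apply Rabs_pos. apply Rabs_pos. lra. }
  lra.
Qed.

Lemma k_bound (a a' p p' y y' m A B C Y E : R) : 0 < m -> m <= p -> m <= p' ->
  Rabs (a - a') <= A -> Rabs a' <= B -> 0 <= y <= Y -> Rabs (p - p') <= C ->
  Rabs (y - y') <= E ->
  a * y / p - a' * y' / p' <= A * Y / m + B * (E / m + Rabs y' * C / (m * m)).
Proof.
  intros hm hp hp' hA hB hy hC hE.
  assert (e1 : a * y / p - a' * y' / p' = a * (y / p) - a' * (y' / p')) by (field; lra).
  rewrite e1. eapply Rle_trans. apply Rle_abs. eapply Rle_trans. apply prod_lip.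
  assert (hyp : Rabs (y / p) <= Y / m).
  { rewrite Rabs_pos_eq by (apply Rmult_le_pos; [lra|left; apply Rinv_0_lt_compat; lra]).
    apply Rmult_le_compat; try lra. left; apply Rinv_0_lt_compat; lra.
    apply Rinv_le_contravar; lra. }
  assert (hyy : Rabs (y / p - y' / p') <= E / m + Rabs y' * C / (m * m)).
  { replace (y / p - y' / p') with ((y - y') * / p + y' * (/ p - / p')) by (field; lra).
    eapply Rle_trans. apply Rabs_triang. rewrite !Rabs_mult.
    pose proof (inv_lip p p' m hm hp hp').
    assert (Rabs (/ p) <= / m).
    { rewrite Rabs_inv, Rabs_pos_eq by lra. apply Rinv_le_contravar; lra. }
    assert (Rabs (y - y') * Rabs (/ p) <= E / m)
      by (apply Rmult_le_compat; auto; apply Rabs_pos).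
    assert (Rabs (p - p') / (m * m) <= C / (m * m))
      by (unfold Rdiv; apply Rmult_le_compat_r; [left; apply Rinv_0_lt_compat; nra| auto]).
    assert (Rabs y' * Rabs (/ p - / p') <= Rabs y' * (C / (m * m))).
    { apply Rmult_le_compat_l. apply Rabs_pos. lra. }
    replace (Rabs y' * C / (m * m)) with (Rabs y' * (C / (m * m))) by (field; lra). lra. }
  assert (Rabs (a - a') * Rabs (y / p) <= A * (Y / m))
    by (apply Rmult_le_compat; auto; apply Rabs_pos).
  assert (Rabs a' * Rabs (y / p - y' / p') <= B * (E / m + Rabs y' * C / (m * m)))
    by (apply Rmult_le_compat; auto; apply Rabs_pos).
  unfold Rdiv at 1. lra.
Qed.

Definition concH (g : R -> R) := forall x y l, 0 <= x -> 0 <= y -> x <> y -> 0 < l < 1 ->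
     l * g x + (1 - l) * g y < g (l * x + (1 - l) * y).

Lemma tangent_weak (g Dg : R -> R) a x : (forall z, is_derive g z (Dg z)) -> concH g ->
  0 <= a -> 0 <= x -> g x <= g a + Dg a * (x - a).
Proof.
  intros hd hc ha hx.
  destruct (Req_dec x a) as [->|hxa]. lra.
  apply Rnot_lt_le. intro H.
  set (e := g x - g a - Dg a * (x - a)).
  assert (he : 0 < e) by (unfold e; lra).
  assert (hxa' : 0 < Rabs (x - a)) by (apply Rabs_pos_lt; lra).
  pose proof (proj1 (is_derive_Reals g a (Dg a)) (hd a)) as hl.
  destruct (hl (e / (2 * Rabs (x - a)))) as [d hdl].
  { apply Rdiv_lt_0_compat; lra. }
  set (l := Rmin (1/2) (d / (2 * Rabs (x - a)))).
  assert (hd0 : 0 < d / (2 * Rabs (x - a))) by (apply Rdiv_lt_0_compat; [apply cond_pos|lra]).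
  assert (hl0 : 0 < l) by (unfold l; apply Rmin_glb_lt; lra).
  assert (hl1 : l <= 1/2) by (unfold l; apply Rmin_l).
  assert (hl2 : l <= d / (2 * Rabs (x - a))) by (unfold l; apply Rmin_r).
  set (h := l * (x - a)).
  assert (hh : Rabs h = l * Rabs (x - a)).
  { unfold h. rewrite Rabs_mult, Rabs_pos_eq; lra. }
  assert (hh0 : h <> 0).
  { intro H0. assert (Rabs h = 0) by (rewrite H0; apply Rabs_R0). nra. }
  assert (hhd : Rabs h < d).
  { rewrite hh. apply Rle_lt_trans with (d / (2 * Rabs (x - a)) * Rabs (x - a)).
    apply Rmult_le_compat_r; lra.
    field_simplify; [|lra]. pose proof (cond_pos d). lra. }
  specialize (hdl h hh0 hhd).
  assert (hq : g (a + h) - g a <= Dg a * h + l * e / 2).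
  { set (q := (g (a + h) - g a) / h) in hdl.
    assert (eq : g (a + h) - g a = h * q) by (unfold q; field; exact hh0).
    rewrite eq.
    assert (h * q - Dg a * h <= Rabs h * Rabs (q - Dg a)).
    { rewrite <- Rabs_mult. eapply Rle_trans; [apply Rle_abs|]. right; f_equal; ring. }
    assert (Rabs h * Rabs (q - Dg a) <= Rabs h * (e / (2 * Rabs (x - a)))).
    { apply Rmult_le_compat_l. apply Rabs_pos. lra. }
    rewrite hh in H0, H1. replace (l * Rabs (x - a) * (e / (2 * Rabs (x - a)))) with (l * e / 2) in H1
      by (field; lra). lra. }
  assert (hl01 : 0 < l < 1) by lra.
  pose proof (hc x a l hx ha hxa hl01) as hcc.
  replace (l * x + (1 - l) * a) with (a + h) in hcc by (unfold h; ring).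
  assert (l * (g x - g a) < l * (Dg a * (x - a) + e / 2)).
  { unfold h in *. unfold e in *. lra. }
  apply Rmult_lt_reg_l in H0; [|lra]. unfold e in H0. lra.
Qed.

Lemma tangent_strict (g Dg : R -> R) a x : (forall z, is_derive g z (Dg z)) -> concH g ->
  0 <= a -> 0 <= x -> x <> a -> g x < g a + Dg a * (x - a).
Proof.
  intros hd hc ha hx hxa.
  pose proof (tangent_weak g Dg a ((a + x) / 2) hd hc ha ltac:(lra)) as h1.
  pose proof (hc x a (1/2) hx ha hxa ltac:(lra)) as h2.
  replace (1 / 2 * x + (1 - 1 / 2) * a) with ((a + x) / 2) in h2 by field.
  lra.
Qed.

Lemma Dg_pos (g Dg : R -> R) x : (forall z, is_derive g z (Dg z)) -> concH g ->
  (forall x y, 0 <= x -> x < y -> g x < g y) -> 0 <= x -> 0 < Dg x.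
Proof.
  intros hd hc hi hx.
  pose proof (tangent_weak g Dg x (x + 1) hd hc hx ltac:(lra)).
  pose proof (hi x (x + 1) hx ltac:(lra)). nra.
Qed.

Lemma Dg_decr (g Dg : R -> R) a x : (forall z, is_derive g z (Dg z)) -> concH g ->
  0 <= a -> a < x -> Dg x < Dg a.
Proof.
  intros hd hc ha hax.
  pose proof (tangent_strict g Dg a x hd hc ha ltac:(lra) ltac:(lra)).
  pose proof (tangent_strict g Dg x a hd hc ltac:(lra) ha ltac:(lra)).
  assert (Dg x * (x - a) < Dg a * (x - a)) by lra.
  apply Rmult_lt_reg_r in H1; lra.
Qed.

Lemma N_incr (g Dg : R -> R) b c2 a x : (forall z, is_derive g z (Dg z)) -> concH g ->
  0 < b -> 0 < c2 -> 0 <= a -> a < x ->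
  c2 * g a - (b + c2 * a) * Dg a < c2 * g x - (b + c2 * x) * Dg x.
Proof.
  intros hd hc hb hc2 ha hax.
  pose proof (tangent_strict g Dg x a hd hc ltac:(lra) ha ltac:(lra)).
  pose proof (Dg_decr g Dg a x hd hc ha hax).
  assert (0 < b + c2 * a) by nra.
  nra.
Qed.
Lemma fermat (f : R -> R) x d r K : is_derive f x d -> 0 < r -> 0 <= K ->
  (forall h, Rabs h < r -> f x <= f (x + h) + K * h ^ 2) -> d = 0.
Proof.
  intros hd hr hK hmin.
  destruct (Req_dec d 0) as [|hd0]; [assumption|exfalso].
  pose proof (proj1 (is_derive_Reals f x d) hd) as hl.
  assert (ha : 0 < Rabs d) by (apply Rabs_pos_lt; exact hd0).
  destruct (hl (Rabs d / 2) ltac:(lra)) as [dl hdl].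
  pose proof (cond_pos dl) as hdl0.
  set (m := Rmin dl (Rmin r (Rabs d / (2 * K + 1))) / 2).
  assert (hm1 : Rmin dl (Rmin r (Rabs d / (2 * K + 1))) <= dl) by apply Rmin_l.
  assert (hm2 : Rmin dl (Rmin r (Rabs d / (2 * K + 1))) <= r)
    by (eapply Rle_trans; [apply Rmin_r|apply Rmin_l]).
  assert (hm3 : Rmin dl (Rmin r (Rabs d / (2 * K + 1))) <= Rabs d / (2 * K + 1))
    by (eapply Rle_trans; [apply Rmin_r|apply Rmin_r]).
  assert (hq0 : 0 < Rabs d / (2 * K + 1)) by (apply Rdiv_lt_0_compat; lra).
  assert (hm0 : 0 < Rmin dl (Rmin r (Rabs d / (2 * K + 1))))
    by (repeat apply Rmin_glb_lt; lra).
  assert (hmK : (2 * K + 1) * m < Rabs d).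
  { unfold m. assert ((2*K+1) * Rmin dl (Rmin r (Rabs d / (2 * K + 1))) <= Rabs d).
    { replace (Rabs d) with ((2*K+1) * (Rabs d / (2 * K + 1))) at 2 by (field; lra).
      apply Rmult_le_compat_l; lra. }
    nra. }
  assert (hm : 0 < m) by (unfold m; lra).
  assert (hmdl : m < dl) by (unfold m; lra).
  assert (hmr : m < r) by (unfold m; lra).
  clearbody m.
  destruct (Rlt_or_le 0 d) as [dpos|dneg].
  - assert (ea : Rabs d = d) by (apply Rabs_pos_eq; lra). rewrite ea in *.
    assert (hh0 : -m <> 0) by lra.
    assert (hhr : Rabs (-m) < dl) by (rewrite Rabs_Ropp, Rabs_pos_eq; lra).
    specialize (hdl (-m) hh0 hhr).
    assert (hhr' : Rabs (-m) < r) by (rewrite Rabs_Ropp, Rabs_pos_eq; lra).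
    specialize (hmin (-m) hhr').
    set (q := (f (x + - m) - f x) / - m) in hdl.
    assert (eq : f (x + - m) - f x = - m * q) by (unfold q; field; lra).
    apply Rabs_def2 in hdl. nra.
  - assert (ea : Rabs d = - d) by (apply Rabs_left1; lra). rewrite ea in *.
    assert (hh0 : m <> 0) by lra.
    assert (hhr : Rabs m < dl) by (rewrite Rabs_pos_eq; lra).
    specialize (hdl m hh0 hhr).
    assert (hhr' : Rabs m < r) by (rewrite Rabs_pos_eq; lra).
    specialize (hmin m hhr').
    set (q := (f (x + m) - f x) / m) in hdl.
    assert (eq : f (x + m) - f x = m * q) by (unfold q; field; lra).
    apply Rabs_def2 in hdl. nra.
Qed.
Lemma cont_pt_of (f : R -> R) x : continuous f x -> continuity_pt f x.
Proof. intro H. apply continuity_pt_filterlim. exact H. Qed.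

Lemma der_cont (f df : R -> R) x : is_derive f x (df x) -> continuous f x.
Proof. intro H. apply (@ex_derive_continuous R_AbsRing R_NormedModule). exists (df x). exact H. Qed.

Lemma bound_cont (f : R -> R) a b : a <= b -> (forall x, continuous f x) ->
  exists M, 0 <= M /\ forall x, a <= x <= b -> Rabs (f x) <= M.
Proof.
  intros hab hc.
  destruct (continuity_ab_min (fun x => - Rabs (f x)) a b hab) as [mx [H1 H2]].
  { intros c _. apply continuity_pt_opp.
    apply (continuity_pt_comp f Rabs). apply cont_pt_of, hc. apply Rcontinuity_abs. }
  exists (Rabs (f mx)). split. apply Rabs_pos.
  intros x hx. specialize (H1 x hx). simpl in H1. lra.
Qed.

Lemma lip (f df : R -> R) a b M : (forall x, is_derive f x (df x)) ->
  (forall x, a <= x <= b -> Rabs (df x) <= M) ->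
  forall x y, a <= x <= b -> a <= y <= b -> Rabs (f x - f y) <= M * Rabs (x - y).
Proof.
  intros hd hM x y hx hy.
  destruct (MVT_gen f y x df) as [c [hc e]].
  { intros z _. apply hd. }
  { intros z _. apply cont_pt_of. eapply der_cont. apply hd. }
  rewrite e, Rabs_mult.
  apply Rmult_le_compat_r. apply Rabs_pos.
  apply hM.
  destruct hc as [hc1 hc2].
  split.
  - eapply Rle_trans; [|exact hc1]. apply Rmin_glb; lra.
  - eapply Rle_trans; [exact hc2|]. apply Rmax_lub; lra.
Qed.
Lemma Gam_eq v s t : 0 < s < t -> Gam v s t = (v s + v t - v (t - s)) / 2.
Proof.
  intros h. unfold Gam. rewrite !Rabs_pos_eq by lra. reflexivity.
Qed.

Lemma ups_decomp v b c1 c2 s t : 0 < s < t -> 0 < v t -> 0 < detSigma v s t ->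
  Upsilon v b c1 c2 s t = Lc v b c2 t +
   (if Rlt_dec (c1 * s) (kfun v b c2 s t)
    then (kfun v b c2 s t - c1 * s) ^ 2 * v t / (2 * detSigma v s t) else 0).
Proof.
  intros hs hv hd.
  unfold Upsilon, Lc.
  destruct (Rlt_dec (c1 * s) (kfun v b c2 s t)) as [h|h]; [|lra].
  unfold Lambda, kfun, detSigma in *.
  assert (e1 : Gam v (t - s) t = (v (t - s) + v t - v s) / 2).
  { unfold Gam. rewrite !Rabs_pos_eq by lra. replace (t - (t - s)) with s by ring. reflexivity. }
  rewrite e1. rewrite Gam_eq in * by lra.
  field. split; [|lra].
  intro H. apply (Rlt_irrefl 0). rewrite <- H at 2. nra.
Qed.

Lemma det_nonneg v s t : psd_kernel v -> v 0 = 0 -> 0 < v s -> 0 < s < t ->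
  0 <= detSigma v s t.
Proof.
  intros hp h0 hvs hs.
  pose proof (hp 1%nat (fun i => match i with O => s | _ => t end)
                (fun i => match i with O => Gam v s t | _ => - v s end)) as H.
  simpl in H.
  assert (e1 : Gam v s s = v s).
  { unfold Gam. replace (s - s) with 0 by ring. rewrite Rabs_R0, h0, Rabs_pos_eq by lra. field. }
  assert (e2 : Gam v t t = v t).
  { unfold Gam. replace (t - t) with 0 by ring. rewrite Rabs_R0, h0, Rabs_pos_eq by lra. field. }
  assert (e3 : Gam v t s = Gam v s t).
  { unfold Gam. rewrite (Rabs_minus_sym s t). field. }
  rewrite e1, e2, e3 in H. unfold detSigma.
  assert (0 <= v s * (v t * v s - Gam v s t * Gam v s t)) by nra.
  apply Rmult_le_reg_l with (v s); [lra|]. lra.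
Qed.

Lemma der_prod (f h : R -> R) df dh x : is_derive f x df -> is_derive h x dh ->
  is_derive (fun y => f y * h y) x (df * h x + f x * dh).
Proof.
  intros H1 H2. apply (is_derive_mult f h x df dh H1 H2). intros; apply Rmult_comm.
Qed.

Lemma cont_eps (f : R -> R) x0 : continuity_pt f x0 -> forall e, 0 < e ->
  exists d, 0 < d /\ forall x, Rabs (x - x0) < d -> Rabs (f x - f x0) < e.
Proof.
  intros H e he.
  destruct (H e he) as [d [hd H']].
  exists d. split; auto. intros x hx.
  destruct (Req_dec x x0) as [->|hne].
  - rewrite Rminus_diag, Rabs_R0. exact he.
  - apply H'. split. split. exact I. auto. exact hx.
Qed.

Lemma wbounds (g : R -> R) T :
  (forall x, is_derive g x (Derive g x)) ->
  (forall x, is_derive (Derive g) x (Derive (Derive g) x)) ->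
  (forall x, continuous (Derive (Derive g)) x) -> 0 <= T ->
  exists M1 M2, 0 <= M1 /\ 0 <= M2 /\
   (forall x y, 0 <= x <= T -> 0 <= y <= T -> Rabs (g x * g x - g y * g y) <= M1 * Rabs (x - y)) /\
   (forall s u1 u2, 0 <= s -> s <= u1 <= T -> s <= u2 <= T ->
      Rabs ((g u1 * g u1 - g (u1 - s) * g (u1 - s)) - (g u2 * g u2 - g (u2 - s) * g (u2 - s)))
        <= M2 * s * Rabs (u1 - u2)).
Proof.
  intros hd hd2 hdc hT.
  set (Dg := Derive g) in *. set (DDg := Derive Dg) in *.
  set (w := fun x => g x * g x).
  set (w1 := fun x => Dg x * g x + g x * Dg x).
  set (w2 := fun x => (DDg x * g x + Dg x * Dg x) + (Dg x * Dg x + g x * DDg x)).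
  assert (hw : forall x, is_derive w x (w1 x)) by (intro x; apply der_prod; apply hd).
  assert (hw1 : forall x, is_derive w1 x (w2 x)).
  { intro x. unfold w1, w2.
    apply (@is_derive_plus R_AbsRing R_NormedModule); apply der_prod; auto. }
  assert (cg : forall x, continuous g x) by (intro x; eapply der_cont; apply hd).
  assert (cDg : forall x, continuous Dg x) by (intro x; eapply der_cont; apply hd2).
  assert (cw1 : forall x, continuous w1 x).
  { intro x. unfold w1. apply (@continuous_plus R_UniformSpace R_AbsRing R_NormedModule);
    apply (@continuous_mult R_UniformSpace R_AbsRing); auto. }
  assert (cw2 : forall x, continuous w2 x).
  { intro x. unfold w2. apply (@continuous_plus R_UniformSpace R_AbsRing R_NormedModule);
    apply (@continuous_plus R_UniformSpace R_AbsRing R_NormedModule);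
    apply (@continuous_mult R_UniformSpace R_AbsRing); auto. }
  destruct (bound_cont w1 0 T hT cw1) as [M1 [hM1 hb1]].
  destruct (bound_cont w2 0 T hT cw2) as [M2 [hM2 hb2]].
  exists M1, M2. split; auto. split; auto. split.
  - intros x y hx hy. apply (lip w w1 0 T M1 hw hb1 x y hx hy).
  - intros s u1 u2 hs hu1 hu2.
    set (F := fun u => w u - w (u - s)).
    set (dF := fun u => w1 u - w1 (u - s)).
    assert (hF : forall u, is_derive F u (dF u)).
    { intro u. unfold F, dF.
      apply (@is_derive_minus R_AbsRing R_NormedModule). apply hw.
      replace (w1 (u - s)) with (scal 1 (w1 (u - s)))
        by (unfold scal; simpl; unfold mult; simpl; ring).
      apply (is_derive_comp w (fun u => u - s)). apply hw.
      auto_derive; auto. }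
    assert (hdF : forall u, s <= u <= T -> Rabs (dF u) <= M2 * s).
    { intros u hu. unfold dF.
      assert (h1 : 0 <= u <= T) by lra. assert (h2 : 0 <= u - s <= T) by lra.
      pose proof (lip w1 w2 0 T M2 hw1 hb2 u (u - s) h1 h2).
      replace (u - (u - s)) with s in H by ring. rewrite (Rabs_pos_eq s) in H by lra. exact H. }
    pose proof (lip F dF s T (M2 * s) hF hdF u1 u2 hu1 hu2). exact H.
Qed.

Lemma small_s (g : R -> R) tstar smax :
  (forall x, is_derive g x (Derive g x)) ->
  (forall x, is_derive (Derive g) x (Derive (Derive g) x)) ->
  concH g -> (forall x y, 0 <= x -> x < y -> g x < g y) -> g 0 = 0 -> 0 < tstar -> 0 < smax ->
  exists sig d1, 0 < sig /\ sig <= smax /\ 0 < d1 /\ forall s, 0 < s <= sig ->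
    d1 * s ^ 2 <= g s * g s -
      ((g s * g s + g tstar * g tstar - g (tstar - s) * g (tstar - s)) / 2) ^ 2 / (g tstar * g tstar).
Proof.
  intros hd hd2 hc hi hg0 ht hsm.
  set (Dg := Derive g) in *.
  assert (cDg : forall x, continuity_pt Dg x) by (intro x; apply cont_pt_of; eapply der_cont; apply hd2).
  assert (hdec : Dg tstar < Dg 0) by (apply (Dg_decr g Dg); auto; lra).
  assert (hDpos : forall x, 0 <= x -> 0 < Dg x) by (intros; apply (Dg_pos g Dg); auto).
  set (e := (Dg 0 - Dg tstar) / 4).
  assert (he : 0 < e) by (unfold e; lra).
  destruct (cont_eps Dg 0 (cDg 0) e he) as [s1 [hs1 H1]].
  destruct (cont_eps Dg tstar (cDg tstar) e he) as [r1 [hr1 H2]].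
  assert (hgt : 0 < g tstar) by (rewrite <- hg0; apply hi; lra).
  set (D0 := Dg 0) in *. set (Dt := Dg tstar) in *.
  assert (hD0 : 0 < D0) by (apply hDpos; lra).
  assert (hDt : 0 < Dt) by (apply hDpos; lra).
  set (s3 := e * g tstar / (D0 * D0 + 1)).
  assert (hs3 : 0 < s3) by (unfold s3; apply Rdiv_lt_0_compat; nra).
  set (sig := Rmin (Rmin smax (s1 / 2)) (Rmin (Rmin (r1 / 2) (tstar / 2)) s3)).
  assert (hsig0 : 0 < sig) by (unfold sig; repeat apply Rmin_glb_lt; lra).
  assert (hsm' : sig <= smax) by (unfold sig; eapply Rle_trans; apply Rmin_l).
  assert (hs1' : sig <= s1 / 2) by (unfold sig; eapply Rle_trans; [apply Rmin_l|apply Rmin_r]).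
  assert (hr1' : sig <= r1 / 2)
    by (unfold sig; eapply Rle_trans; [apply Rmin_r|]; eapply Rle_trans; apply Rmin_l).
  assert (ht' : sig <= tstar / 2)
    by (unfold sig; eapply Rle_trans; [apply Rmin_r|]; eapply Rle_trans; [apply Rmin_l|apply Rmin_r]).
  assert (hs3' : sig <= s3) by (unfold sig; eapply Rle_trans; apply Rmin_r).
  set (a := D0 - e). set (be := Dt + 3 * e / 2).
  assert (hab : be < a) by (unfold a, be, e; lra).
  assert (hbe : 0 < be) by (unfold be; lra).
  exists sig, (a * a - be * be).
  split; auto. split; auto. split. nra.
  intros s hs.
  assert (hgs1 : s * Dg s <= g s).
  { pose proof (tangent_weak g Dg s 0 hd hc ltac:(lra) ltac:(lra)). rewrite hg0 in H. lra. }
  assert (hDs : a < Dg s).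
  { assert (Rabs (s - 0) < s1) by (rewrite Rminus_0_r, Rabs_pos_eq; lra).
    specialize (H1 s H). apply Rabs_def2 in H1. unfold a. lra. }
  assert (hgsa : s * a <= g s) by nra.
  assert (hgs2 : g s <= s * D0).
  { pose proof (tangent_weak g Dg 0 s hd hc ltac:(lra) ltac:(lra)). rewrite hg0 in H. unfold D0. lra. }
  assert (hgs0 : 0 <= g s) by (rewrite <- hg0; left; apply hi; lra).
  assert (hts : g (tstar - s) <= g tstar) by (left; apply hi; lra).
  assert (hts0 : 0 <= g (tstar - s)) by (rewrite <- hg0; left; apply hi; lra).
  assert (hdts : g tstar - g (tstar - s) <= s * (Dt + e)).
  { pose proof (tangent_weak g Dg (tstar - s) tstar hd hc ltac:(lra) ltac:(lra)).
    assert (Rabs (tstar - s - tstar) < r1) by (rewrite Rabs_left; lra).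
    specialize (H2 _ H0). apply Rabs_def2 in H2.
    replace (tstar - (tstar - s)) with s in H by ring. nra. }
  assert (hsD0 : s * (D0 * D0) <= e * g tstar).
  { assert (s <= e * g tstar / (D0 * D0 + 1)) by (fold s3; lra).
    apply Rmult_le_compat_r with (r := D0 * D0 + 1) in H; [|nra].
    replace (e * g tstar / (D0 * D0 + 1) * (D0 * D0 + 1)) with (e * g tstar) in H by (field; nra).
    nra. }
  set (Gm := (g s * g s + g tstar * g tstar - g (tstar - s) * g (tstar - s)) / 2).
  assert (hG0 : 0 <= Gm) by (unfold Gm; nra).
  assert (hG1 : Gm <= s * g tstar * be).
  { unfold Gm, be.
    assert (g s * g s <= s * s * (D0 * D0)) by nra.
    assert (g tstar * g tstar - g (tstar - s) * g (tstar - s) <= 2 * g tstar * (s * (Dt + e))) by nra.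
    nra. }
  assert (hq : Gm ^ 2 / (g tstar * g tstar) <= s ^ 2 * (be * be)).
  { apply Rmult_le_reg_r with (g tstar * g tstar); [nra|].
    replace (Gm ^ 2 / (g tstar * g tstar) * (g tstar * g tstar)) with (Gm ^ 2) by (field; lra).
    assert (0 <= s * g tstar * be) by nra.
    assert (Gm * Gm <= (s * g tstar * be) * (s * g tstar * be)) by (apply Rmult_le_compat; lra).
    nra. }
  assert (s ^ 2 * (a * a) <= g s * g s) by (assert (0 <= s * a) by nra; nra).
  nra.
Qed.

Lemma key (v g : R -> R) b c1 c2 tstar :
 (forall x, is_derive g x (Derive g x)) ->
 (forall x, is_derive (Derive g) x (Derive (Derive g) x)) ->
 (forall x, continuous (Derive (Derive g)) x) ->
 concH g -> (forall x y, 0 <= x -> x < y -> g x < g y) -> g 0 = 0 ->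
 (forall x, 0 <= x -> v x = g x * g x) ->
 psd_kernel v -> (forall s t, 0 < s < t -> detSigma v s t <> 0) ->
 0 < b -> 0 < c2 -> c2 < c1 -> b / (c1 - c2) < tstar ->
 (forall s, 0 < s < tstar -> kfun v b c2 s tstar <= c1 * s) ->
 exists r K, 0 < r /\ 0 <= K /\ forall h, Rabs h < r -> b / (c1 - c2) < tstar + h /\
   Rbar_le (supUpsilon v b c1 c2 (tstar + h)) (Lc v b c2 (tstar + h) + K * h ^ 2).
Proof.
  intros hd hd2 hdc hc hi hg0 hvw hpsd hSig hb hc2 hc12 ht hall.
  set (t0 := b / (c1 - c2)) in *.
  assert (ht0 : 0 < t0) by (unfold t0; apply Rdiv_lt_0_compat; lra).
  assert (ht0e : t0 * (c1 - c2) = b) by (unfold t0; field; lra).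
  assert (hgpos : forall x, 0 < x -> 0 < g x) by (intros x hx; rewrite <- hg0; apply hi; lra).
  assert (hv0 : v 0 = 0) by (rewrite hvw, hg0 by lra; ring).
  assert (hvpos : forall x, 0 < x -> 0 < v x)
    by (intros x hx; rewrite hvw by lra; pose proof (hgpos x hx); nra).
  assert (hvle : forall x y, 0 <= x -> x <= y -> v x <= v y).
  { intros x y hx hxy. rewrite !hvw by lra. destruct (Req_dec x y) as [->|hne]; [lra|].
    assert (g x < g y) by (apply hi; lra). assert (0 <= g x) by (rewrite <- hg0; destruct (Req_dec x 0) as [->|]; [lra|left; apply hi; lra]).
    nra. }
  assert (hdet : forall s t, 0 < s < t -> 0 < detSigma v s t).
  { intros s t hs. pose proof (det_nonneg v s t hpsd hv0 (hvpos s ltac:(lra)) hs).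
    pose proof (hSig s t hs). lra. }
  set (r0 := Rmin 1 ((c1 - c2) * (tstar - t0) / (2 * (c1 + c2)))).
  assert (hr0a : 0 < r0).
  { unfold r0. apply Rmin_glb_lt. lra. apply Rdiv_lt_0_compat; nra. }
  assert (hr0b : r0 <= 1) by apply Rmin_l.
  assert (hr0c : (c1 + c2) * r0 <= (c1 - c2) * (tstar - t0) / 2).
  { assert (r0 <= (c1 - c2) * (tstar - t0) / (2 * (c1 + c2))) by apply Rmin_r.
    apply Rmult_le_compat_l with (r := c1 + c2) in H; [|lra].
    replace ((c1 + c2) * ((c1 - c2) * (tstar - t0) / (2 * (c1 + c2)))) with
      ((c1 - c2) * (tstar - t0) / 2) in H by (field; lra). exact H. }
  assert (hr0d : t0 < tstar - r0) by nra.
  set (shi := (b + c2 * (tstar + r0)) / c1).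
  assert (hshi0 : 0 < shi) by (unfold shi; apply Rdiv_lt_0_compat; nra).
  assert (hshie : c1 * shi = b + c2 * (tstar + r0)) by (unfold shi; field; lra).
  assert (hshi1 : shi < tstar - r0) by nra.
  set (T := tstar + 1).
  destruct (wbounds g T hd hd2 hdc ltac:(unfold T; lra)) as [M1 [M2 [hM1 [hM2 [LW LF]]]]].
  assert (LV : forall x y, 0 <= x <= T -> 0 <= y <= T -> Rabs (v x - v y) <= M1 * Rabs (x - y)).
  { intros x y hx hy. rewrite !hvw by lra. apply LW; auto. }
  assert (LFv : forall s u1 u2, 0 <= s -> s <= u1 <= T -> s <= u2 <= T ->
      Rabs ((v u1 - v (u1 - s)) - (v u2 - v (u2 - s))) <= M2 * s * Rabs (u1 - u2)).
  { intros s u1 u2 hs h1 h2. rewrite !hvw by lra. apply LF; auto. }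
  destruct (small_s g tstar shi hd hd2 hc hi hg0 ltac:(lra) hshi0) as [sig [d1 [hsig [hsigs [hd1 Hsm]]]]].
  set (Sv := fun s t => v s - (Gam v s t) ^ 2 / v t).
  assert (hSvg : forall s, 0 < s < tstar -> Sv s tstar = g s * g s -
      ((g s * g s + g tstar * g tstar - g (tstar - s) * g (tstar - s)) / 2) ^ 2 / (g tstar * g tstar)).
  { intros s hs. unfold Sv. rewrite Gam_eq by lra. rewrite !hvw by lra. reflexivity. }
  assert (hdetS : forall s t, 0 < s < t -> detSigma v s t = v t * Sv s t).
  { intros s t hs. unfold Sv, detSigma. pose proof (hvpos t ltac:(lra)). field. lra. }
  assert (hII : forall s, 0 < s <= sig -> d1 * s ^ 2 <= Sv s tstar).
  { intros s hs. rewrite hSvg by lra. apply Hsm; auto. }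
  set (Sw := fun s => g s * g s -
      ((g s * g s + g tstar * g tstar - g (tstar - s) * g (tstar - s)) / 2) ^ 2 / (g tstar * g tstar)).
  assert (hgt : 0 < g tstar) by (apply hgpos; lra).
  destruct (continuity_ab_min Sw sig shi hsigs) as [m [hm1 hm2]].
  { intros c _. apply cont_pt_of.
    apply (@ex_derive_continuous R_AbsRing R_NormedModule).
    unfold Sw. auto_derive; repeat split; try (eexists; apply hd); try nra. }
  assert (hSm : 0 < Sw m).
  { unfold Sw. rewrite <- hSvg by lra. pose proof (hdet m tstar ltac:(lra)).
    rewrite hdetS in H by lra. pose proof (hvpos tstar ltac:(lra)).
    apply Rmult_lt_reg_l with (v tstar); lra. }
  set (dl := Rmin d1 (Sw m / (shi * shi))).
  assert (hdl : 0 < dl) by (unfold dl; apply Rmin_glb_lt; [lra|apply Rdiv_lt_0_compat; nra]).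
  assert (hS : forall s, 0 < s <= shi -> dl * s ^ 2 <= Sv s tstar).
  { intros s hs. destruct (Rle_or_lt s sig) as [h1|h1].
    - eapply Rle_trans; [|apply hII; lra]. apply Rmult_le_compat_r. nra. apply Rmin_l.
    - pose proof (hm1 s ltac:(lra)). assert (eS : Sw s = Sv s tstar) by (rewrite hSvg by lra; reflexivity). rewrite eS in H.
      assert (dl <= Sw m / (shi * shi)) by apply Rmin_r.
      assert (dl * s ^ 2 <= Sw m / (shi * shi) * s ^ 2) by (apply Rmult_le_compat_r; nra).
      assert (Sw m / (shi * shi) * s ^ 2 <= Sw m).
      { apply Rmult_le_reg_r with (shi * shi); [nra|].
        replace (Sw m / (shi * shi) * s ^ 2 * (shi * shi)) with (Sw m * (s * s)) by (field; lra).
        assert (s * s <= shi * shi) by nra. nra. }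
      lra. }
  set (wmin := v (tstar - r0)).
  assert (hwmin : 0 < wmin) by (apply hvpos; lra).
  assert (hvt : forall t, tstar - r0 <= t -> wmin <= v t) by (intros; apply hvle; lra).
  assert (G1 : forall s t, 0 < s <= shi -> tstar - r0 <= t <= tstar + r0 ->
     Rabs (Gam v s t - Gam v s tstar) <= M2 * s * Rabs (t - tstar) / 2).
  { intros s t hs htt. rewrite !Gam_eq by lra.
    replace ((v s + v t - v (t - s)) / 2 - (v s + v tstar - v (tstar - s)) / 2) with
      (((v t - v (t - s)) - (v tstar - v (tstar - s))) / 2) by field.
    unfold Rdiv. rewrite Rabs_mult, (Rabs_pos_eq (/ 2)) by lra.
    apply Rmult_le_compat_r. lra. apply LFv; unfold T; lra. }
  assert (G2 : forall s t, 0 < s <= shi -> tstar - r0 <= t <= tstar + r0 ->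
     Rabs (Gam v s t) <= M1 * s).
  { intros s t hs htt. rewrite Gam_eq by lra.
    pose proof (LV s 0 ltac:(unfold T; lra) ltac:(unfold T; lra)) as h1.
    pose proof (LV t (t - s) ltac:(unfold T; lra) ltac:(unfold T; lra)) as h2.
    rewrite hv0 in h1. replace (s - 0) with s in h1 by ring. replace (t - (t - s)) with s in h2 by ring.
    rewrite (Rabs_pos_eq s) in h1, h2 by lra.
    replace ((v s + v t - v (t - s)) / 2) with ((v s - 0) / 2 + (v t - v (t - s)) / 2) by field.
    eapply Rle_trans. apply Rabs_triang. unfold Rdiv. rewrite !Rabs_mult, (Rabs_pos_eq (/ 2)) by lra.
    rewrite Rminus_0_r in *. lra. }
  assert (P1 : forall t, tstar - r0 <= t <= tstar + r0 -> Rabs (v t - v tstar) <= M1 * Rabs (t - tstar)).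
  { intros t htt. apply LV; unfold T; lra. }
  set (Y := b + c2 * T).
  set (K1 := M2 / 2 * Y / wmin + M1 * (c2 / wmin + Rabs (b + c2 * tstar) * M1 / (wmin * wmin))).
  set (K3 := M2 * M1 / wmin + M1 * M1 * M1 / (wmin * wmin)).
  assert (hK1 : 0 <= K1).
  { unfold K1. apply Rplus_le_le_0_compat.
    apply Rmult_le_pos; [apply Rmult_le_pos; unfold Y, T; nra|left; apply Rinv_0_lt_compat; lra].
    apply Rmult_le_pos; auto. apply Rplus_le_le_0_compat.
    apply Rmult_le_pos; [lra|left; apply Rinv_0_lt_compat; lra].
    apply Rmult_le_pos; [apply Rmult_le_pos; [apply Rabs_pos|auto]|left; apply Rinv_0_lt_compat; nra]. }
  assert (hK3 : 0 <= K3).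
  { unfold K3. apply Rplus_le_le_0_compat.
    apply Rmult_le_pos; [nra|left; apply Rinv_0_lt_compat; lra].
    apply Rmult_le_pos; [nra|left; apply Rinv_0_lt_compat; nra]. }
  set (rr := Rmin r0 (dl / (2 * K3 + 2))).
  assert (hrr0 : 0 < rr) by (unfold rr; apply Rmin_glb_lt; [lra|apply Rdiv_lt_0_compat; lra]).
  exists rr, (K1 * K1 / dl). split; auto. split.
  { apply Rmult_le_pos. nra. left; apply Rinv_0_lt_compat; lra. }
  intros h hh.
  assert (hhr0 : Rabs h < r0) by (eapply Rlt_le_trans; [exact hh|apply Rmin_l]).
  assert (hhK : K3 * Rabs h <= dl / 2).
  { assert (Rabs h <= dl / (2 * K3 + 2)) by (left; eapply Rlt_le_trans; [exact hh|apply Rmin_r]).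
    apply Rmult_le_compat_r with (r := 2 * K3 + 2) in H; [|lra].
    replace (dl / (2 * K3 + 2) * (2 * K3 + 2)) with dl in H by (field; lra).
    pose proof (Rabs_pos h). nra. }
  pose proof (Rabs_def2 _ _ hhr0) as [hh1 hh2].
  set (t := tstar + h).
  assert (htt : tstar - r0 <= t <= tstar + r0) by (unfold t; lra).
  assert (hdt : t - tstar = h) by (unfold t; ring).
  split. { unfold t; lra. }
  destruct (Lub_Rbar_correct (fun x => exists s, 0 < s < t /\ x = Upsilon v b c1 c2 s t)) as [_ hl].
  apply hl. intros x [s [hs ->]]. simpl.
  assert (hvt0 : 0 < v t) by (apply hvpos; lra).
  rewrite ups_decomp by (try apply hdet; auto; lra).
  assert (hKh : 0 <= K1 * K1 / dl * h ^ 2).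
  { apply Rmult_le_pos. apply Rmult_le_pos. nra. left; apply Rinv_0_lt_compat; lra. nra. }
  destruct (Rlt_dec (c1 * s) (kfun v b c2 s t)) as [hact|]; [|lra].
  assert (hdst : 0 < detSigma v s t) by (apply hdet; lra).
  assert (hvs : 0 < v s) by (apply hvpos; lra).
  assert (hGle : Gam v s t <= v t).
  { pose proof (hvle s t ltac:(lra) ltac:(lra)). unfold detSigma in hdst. nra. }
  assert (hy : 0 < b + c2 * t) by nra.
  assert (hk : kfun v b c2 s t <= b + c2 * t).
  { unfold kfun. assert (Gam v s t / v t <= 1).
    { apply Rmult_le_reg_r with (v t); [lra|]. field_simplify; lra. }
    nra. }
  assert (hsl : s < shi).
  { assert (c1 * s < c1 * shi) by (rewrite hshie; nra). nra. }
  assert (hs' : 0 < s <= shi) by lra.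
  pose proof (hall s ltac:(lra)) as hks.
  assert (hG1 := G1 s t hs' htt). rewrite hdt in hG1.
  assert (hG2 := G2 s t hs' htt).
  assert (hG2' := G2 s tstar hs' ltac:(lra)).
  assert (hP := P1 t htt). rewrite hdt in hP.
  assert (kdiff : kfun v b c2 s t - kfun v b c2 s tstar <= s * Rabs h * K1).
  { unfold kfun.
    replace (Gam v s t / v t * (b + c2 * t) - Gam v s tstar / v tstar * (b + c2 * tstar)) with
      (Gam v s t * (b + c2 * t) / v t - Gam v s tstar * (b + c2 * tstar) / v tstar)
      by (field; split; apply Rgt_not_eq; apply hvpos; lra).
    eapply Rle_trans.
    apply (k_bound _ _ _ _ _ _ wmin (M2 * s * Rabs h / 2) (M1 * s) (M1 * Rabs h) Y (c2 * Rabs h));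
      auto; try (apply hvt; lra).
    { unfold Y, T. split; nra. }
    { replace (b + c2 * t - (b + c2 * tstar)) with (c2 * h) by (unfold t; ring).
      rewrite Rabs_mult, (Rabs_pos_eq c2) by lra. lra. }
    right. unfold K1. field. lra. }
  assert (Sdiff : Sv s tstar - Sv s t <= s ^ 2 * Rabs h * K3).
  { unfold Sv.
    replace (v s - Gam v s tstar ^ 2 / v tstar - (v s - Gam v s t ^ 2 / v t)) with
      (Gam v s t ^ 2 / v t - Gam v s tstar ^ 2 / v tstar) by ring.
    eapply Rle_trans.
    apply (sq_quot _ _ _ _ wmin (M2 * s * Rabs h / 2) (M1 * s) (M1 * Rabs h)); auto; try (apply hvt; lra).
    right. unfold K3. field. lra. }
  assert (hSt : dl * s ^ 2 / 2 <= Sv s t).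
  { pose proof (hS s hs').
    assert (s ^ 2 * Rabs h * K3 <= s ^ 2 * (dl / 2)).
    { rewrite Rmult_assoc. apply Rmult_le_compat_l. nra. lra. }
    lra. }
  rewrite (hdetS s t) by lra.
  set (u := kfun v b c2 s t - c1 * s).
  assert (hu0 : 0 < u) by (unfold u; lra).
  assert (hu1 : u <= s * Rabs h * K1) by (unfold u; lra).
  assert (hSp : 0 < Sv s t) by (assert (0 < dl * s ^ 2 / 2) by (apply Rmult_lt_0_compat; [apply Rmult_lt_0_compat; nra|lra]); lra).
  replace (u ^ 2 * v t / (2 * (v t * Sv s t))) with (u ^ 2 / (2 * Sv s t)) by (field; lra).
  apply Rplus_le_compat_l.
  apply Rmult_le_reg_r with (2 * Sv s t); [lra|].
  replace (u ^ 2 / (2 * Sv s t) * (2 * Sv s t)) with (u ^ 2) by (field; lra).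
  assert (hu2 : u ^ 2 <= (s * Rabs h * K1) ^ 2) by (apply pow_incr; lra).
  assert (e2 : (s * Rabs h * K1) ^ 2 = K1 * K1 / dl * h ^ 2 * (dl * s ^ 2)).
  { rewrite <- (pow2_abs h). field. lra. }
  assert (K1 * K1 / dl * h ^ 2 * (dl * s ^ 2) <= K1 * K1 / dl * h ^ 2 * (2 * Sv s t)).
  { apply Rmult_le_compat_l. exact hKh. lra. }
  lra.
Qed.



Lemma deriv_Lw (g : R -> R) b c2 x : (forall x, is_derive g x (Derive g x)) -> g x <> 0 ->
  is_derive (fun t => (b + c2 * t) ^ 2 / (2 * (g t * g t))) x
    ((b + c2 * x) / (g x * g x * g x) * (c2 * g x - (b + c2 * x) * Derive g x)).
Proof.
  intros hd hg.
  assert (ex_derive g x) by (eexists; apply hd).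
  assert (H0 : exists d : R, is_derive (fun t => (b + c2 * t) ^ 2 / (2 * (g t * g t))) x d /\
    d = (b + c2 * x) / (g x * g x * g x) * (c2 * g x - (b + c2 * x) * Derive g x)).
  { eexists. split.
    - auto_derive. { repeat split; try assumption. intro H1. apply hg. nra. } reflexivity.
    - change (Derive (fun x0 => g x0) x) with (Derive g x). field. exact hg. }
  destruct H0 as [d [H1 H2]]. rewrite <- H2. exact H1.
Qed.

Theorem lemma3p9 (v : R -> R) (b c1 c2 : R)
  (hv_nonneg : forall t, 0 <= t -> 0 <= v t)
  (hv_cont : forall t, 0 <= t ->
     filterlim v (within (fun y => 0 <= y) (locally t)) (locally (v t)))
  (hv0 : v 0 = 0)
  (hv_growth : exists alpha, alpha < 2 /\
     is_lim (fun t => v t / Rpower t alpha) p_infty 0)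
  (hv_gauss : psd_kernel v)
  (hSigma : forall s t, 0 < s < t -> detSigma v s t <> 0)
  (hb : 0 < b) (hc2 : 0 < c2) (hc12 : c2 < c1)
  (hA : assumptionA v)
  (tF : R) (htF : 0 < tF) (htFmin : forall t, 0 < t -> Lc v b c2 tF <= Lc v b c2 t)
  (hc1F : Rbar_lt c1 (c1F v b c2 tF))
  (tstar : R) (htstar : b / (c1 - c2) < tstar)
  (htstar_min : forall t, b / (c1 - c2) < t ->
     Rbar_le (supUpsilon v b c1 c2 tstar) (supUpsilon v b c1 c2 t))
  (sstar : R) (hsstar : 0 < sstar < tstar)
  (hsstar_max : forall s, 0 < s < tstar ->
     Upsilon v b c1 c2 s tstar <= Upsilon v b c1 c2 sstar tstar) :
  c1 * sstar <= kfun v b c2 sstar tstar.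
Proof.
  destruct hA as [[g [hgv [hgd1 [hgd2 hgc]]]] [hinc hconc]].
  assert (hd : forall x, is_derive g x (Derive g x)) by (intro x; apply Derive_correct, hgd1).
  assert (hd2 : forall x, is_derive (Derive g) x (Derive (Derive g) x))
    by (intro x; apply Derive_correct, hgd2).
  assert (hvw : forall x, 0 <= x -> v x = g x * g x).
  { intros x hx. rewrite hgv by exact hx. rewrite sqrt_sqrt; auto. }
  assert (hgi : forall x y, 0 <= x -> x < y -> g x < g y).
  { intros x y hx hxy. rewrite !hgv by lra. apply hinc; auto. }
  assert (hgc' : concH g).
  { intros x y l hx hy hxy hl. rewrite !hgv by nra. apply hconc; auto. }
  assert (hg0 : g 0 = 0) by (rewrite hgv, hv0, sqrt_0; lra).
  assert (hgpos : forall x, 0 < x -> 0 < g x) by (intros x hx; rewrite <- hg0; apply hgi; lra).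
  assert (hvpos : forall x, 0 < x -> 0 < v x)
    by (intros x hx; rewrite hvw by lra; pose proof (hgpos x hx); nra).
  assert (ht0 : 0 < b / (c1 - c2)) by (apply Rdiv_lt_0_compat; lra).
  destruct (Rle_or_lt (c1 * sstar) (kfun v b c2 sstar tstar)) as [done|hneg]; [exact done|exfalso].
  assert (hU : Upsilon v b c1 c2 sstar tstar = Lc v b c2 tstar).
  { unfold Upsilon, Lc. destruct (Rlt_dec (c1 * sstar) (kfun v b c2 sstar tstar)); [lra|reflexivity]. }
  assert (hdet : forall s t, 0 < s < t -> 0 < detSigma v s t).
  { intros s t hs. pose proof (det_nonneg v s t hv_gauss hv0 (hvpos s ltac:(lra)) hs).
    pose proof (hSigma s t hs). lra. }
  assert (hall : forall s, 0 < s < tstar -> kfun v b c2 s tstar <= c1 * s).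
  { intros s hs. apply Rnot_lt_le. intro hk.
    pose proof (hsstar_max s hs) as hm.
    rewrite ups_decomp in hm by (try apply hdet; try apply hvpos; lra).
    destruct (Rlt_dec (c1 * s) (kfun v b c2 s tstar)) as [_|]; [|lra].
    rewrite hU in hm.
    assert (0 < (kfun v b c2 s tstar - c1 * s) ^ 2 * v tstar / (2 * detSigma v s tstar)).
    { pose proof (hdet s tstar hs). pose proof (hvpos tstar ltac:(lra)).
      apply Rdiv_lt_0_compat; [|lra]. apply Rmult_lt_0_compat; [|lra].
      apply pow_lt. lra. }
    lra. }
  destruct (key v g b c1 c2 tstar hd hd2 hgc hgc' hgi hg0 hvw hv_gauss hSigma hb hc2 hc12 htstar hall)
    as [r [K [hr [hK hkey]]]].
  set (f := fun t => (b + c2 * t) ^ 2 / (2 * (g t * g t))).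
  assert (hfL : forall t, 0 < t -> Lc v b c2 t = f t).
  { intros t ht. unfold Lc, f. rewrite hvw by lra. reflexivity. }
  set (N := fun t => c2 * g t - (b + c2 * t) * Derive g t).
  assert (hcrit : forall x r0 K0, 0 < x -> 0 < r0 -> 0 <= K0 ->
     (forall h, Rabs h < r0 -> f x <= f (x + h) + K0 * h ^ 2) -> N x = 0).
  { intros x r0 K0 hx hr0 hK0 hm.
    pose proof (deriv_Lw g b c2 x hd ltac:(pose proof (hgpos x hx); lra)) as hdx.
    pose proof (fermat f x _ r0 K0 hdx hr0 hK0 hm) as e.
    pose proof (hgpos x hx).
    assert (0 < (b + c2 * x) / (g x * g x * g x)).
    { apply Rdiv_lt_0_compat. nra. repeat apply Rmult_lt_0_compat; lra. }
    unfold N. apply Rmult_integral in e. destruct e; lra. }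
  assert (hNs : N tstar = 0).
  { apply (hcrit tstar (Rmin r (tstar / 2)) K); try lra.
    - apply Rmin_glb_lt; lra.
    - intros h hh.
      assert (hh1 : Rabs h < r) by (eapply Rlt_le_trans; [exact hh|apply Rmin_l]).
      assert (hh2 : Rabs h < tstar / 2) by (eapply Rlt_le_trans; [exact hh|apply Rmin_r]).
      apply Rabs_def2 in hh2.
      destruct (hkey h hh1) as [ht hle].
      pose proof (htstar_min _ ht) as hm.
      assert (hsup : Rbar_le (Upsilon v b c1 c2 sstar tstar) (supUpsilon v b c1 c2 tstar)).
      { destruct (Lub_Rbar_correct (fun x => exists s, 0 < s < tstar /\ x = Upsilon v b c1 c2 s tstar))
          as [hub _]. apply hub. exists sstar. split; auto. }
      pose proof (Rbar_le_trans _ _ _ hsup (Rbar_le_trans _ _ _ hm hle)) as hf.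
      simpl in hf. rewrite hU in hf. rewrite !hfL in hf by lra. exact hf. }
  assert (hNF : N tF = 0).
  { apply (hcrit tF tF 0); try lra.
    intros h hh. apply Rabs_def2 in hh.
    rewrite <- !hfL by lra. pose proof (htFmin (tF + h) ltac:(lra)). lra. }
  assert (heq : tstar = tF).
  { destruct (Rtotal_order tstar tF) as [hl|[he|hl]]; auto.
    - pose proof (N_incr g (Derive g) b c2 tstar tF hd hgc' hb hc2 ltac:(lra) hl). unfold N in *. lra.
    - pose proof (N_incr g (Derive g) b c2 tF tstar hd hgc' hb hc2 ltac:(lra) hl). unfold N in *. lra. }
  subst tF.
  assert (hex : exists s, 0 < s < tstar /\ c1 < kfun v b c2 s tstar / s).
  { destruct (Classical_Prop.classic (exists s, 0 < s < tstar /\ c1 < kfun v b c2 s tstar / s)) as [H|H];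
      [exact H|exfalso].
    destruct (Lub_Rbar_correct (fun x => exists s, 0 < s < tstar /\ x = kfun v b c2 s tstar / s))
      as [_ hlub].
    assert (hub : is_ub_Rbar (fun x => exists s, 0 < s < tstar /\ x = kfun v b c2 s tstar / s) c1).
    { intros x [s [hs ->]]. simpl. apply Rnot_lt_le. intro hlt. apply H. exists s. auto. }
    pose proof (hlub _ hub). unfold c1F in hc1F.
    pose proof (Rbar_lt_le_trans _ _ _ hc1F H0). simpl in H1. lra. }
  destruct hex as [s [hs hlt]].
  pose proof (hall s hs).
  assert (c1 * s < kfun v b c2 s tstar).
  { apply Rmult_lt_compat_r with (r := s) in hlt; [|lra].
    replace (kfun v b c2 s tstar / s * s) with (kfun v b c2 s tstar) in hlt by (field; lra). lra. }
  lra.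
Qed.
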